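(* Let $G$ be a connected graph with globally bounded vertex degree, i.e. there is $A<\infty$ with $\deg(v)\le A$ for every vertex $v$ of $G$. Then its clique graph $\mathcal{C}(G)$ also has globally bounded vertex degree, and $\mathcal{C}(G)$ is roughly isometric to $G$ with constants $C=\epsilon=1$. That is, there is a map $f$ from the vertex set of $G$ to the vertex set of $\mathcal{C}(G)$ such that $$d_G(v,v')-1\le d_{\mathcal{C}(G)}(f(v),f(v'))\le d_G(v,v')+1$$ for all vertices $v,v'$ of $G$, and every vertex of $\mathcal{C}(G)$ lies within $d_{\mathcal{C}(G)}$-distance $1$ of some point of $f(G)$.
   Context: A graph is regarded as a metric space on its vertex set via the graph metric: $d_G(v,v')$ is the minimal number of edges in a path joining $v$ and $v'$. A clique of $G$ is a maximal complete subgraph, i.e. a maximal set of vertices that are pairwise joined by edges. The clique graph $\mathcal{C}(G)$ has the cliques of $G$ as its vertices. Two cliques are joined by an edge in $\mathcal{C}(G)$ iff they share at least one vertex of $G$. $\mathcal{C}(G)$ carries its own graph metric $d_{\mathcal{C}(G)}$. A map $f:X\to Y$ between metric spaces is an $\epsilon$-rough isometry (with $C=\epsilon$) if $|d_Y(f(x),f(x'))-d_X(x,x')|\le\epsilon$ for all $x,x'\in X$ and every $y\in Y$ satisfies $d_Y(y,f(x))\le C$ for some $x\in X$. *)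

(* Defs.v *)
From Stdlib Require Import List.
Set Implicit Arguments.

Section Graphs.
Variables (V : Type) (adj : V -> V -> Prop).

Definition simple_graph : Prop :=
  (forall u v, adj u v -> adj v u) /\ (forall v, ~ adj v v).

Inductive walk : nat -> V -> V -> Prop :=
| walk0 v : walk 0 v v
| walkS n u v w : adj u v -> walk n v w -> walk (S n) u w.

Definition connected : Prop := forall u v, exists n, walk n u v.

Definition is_dist (u v : V) (n : nat) : Prop :=
  walk n u v /\ forall m, walk m u v -> n <= m.

Definition bounded_degree : Prop :=
  exists A : nat, forall (v : V) (l : list V),
    NoDup l -> (forall w, In w l -> adj v w) -> length l <= A.

Definition complete (K : V -> Prop) : Prop :=
  forall x y, K x -> K y -> x <> y -> adj x y.

Definition is_clique (K : V -> Prop) : Prop :=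
  complete K /\
  forall K' : V -> Prop, complete K' -> (forall x, K x -> K' x) -> forall x, K' x -> K x.

Definition clique : Type := { K : V -> Prop | is_clique K }.

Definition clique_adj (K K' : clique) : Prop :=
  K <> K' /\ exists v, proj1_sig K v /\ proj1_sig K' v.

End Graphs.

(* Main.v *)
Require Import Defs.
From Stdlib Require Import Arith List Lia Classical ClassicalEpsilon FunctionalExtensionality PropExtensionality ProofIrrelevance.
Import ListNotations.

Lemma walk_min {V : Type} (R : V -> V -> Prop) : forall n u v,
  walk R n u v -> exists m, is_dist R u v m.
Proof.
  intros n u v. revert n.
  assert (H : forall k n, n <= k -> walk R n u v -> exists m, is_dist R u v m).
  { induction k; intros n Hn Hw;
    destruct (classic (exists m, m < n /\ walk R m u v)) as [[m [Hm Hw']]|Hno].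
    - lia.
    - exists n; split; auto; intros m Hm. destruct (le_lt_dec n m); auto.
      exfalso; apply Hno; eauto.
    - apply (IHk m); auto; lia.
    - exists n; split; auto; intros m Hm. destruct (le_lt_dec n m); auto.
      exfalso; apply Hno; eauto. }
  intros n; apply (H n n); auto.
Qed.

Lemma finite_enum {V : Type} (P : V -> Prop) N :
  (forall l, NoDup l -> (forall y, In y l -> P y) -> length l <= N) ->
  exists l, NoDup l /\ (forall y, P y <-> In y l).
Proof.
  intros HN.
  assert (H : forall n l, NoDup l -> (forall y, In y l -> P y) -> N + 1 <= length l + n ->
    exists l', NoDup l' /\ (forall y, P y <-> In y l')).
  { induction n; intros l Hl HP Hlen;
    destruct (classic (exists y, P y /\ ~ In y l)) as [[y [Py Hy]]|Hno].
    - exfalso. assert (length (y :: l) <= N).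
      { apply HN. constructor; auto. intros z [<-|Hz]; auto. }
      simpl in *; lia.
    - exists l; split; auto. intros y; split; auto. intros Py.
      apply NNPP; intro; apply Hno; eauto.
    - apply (IHn (y :: l)). constructor; auto. intros z [<-|Hz]; auto. simpl; lia.
    - exists l; split; auto. intros y; split; auto. intros Py.
      apply NNPP; intro; apply Hno; eauto. }
  apply (H (N + 1) []); [constructor | intros y [] | simpl; lia].
Qed.

Section S.
Context {V : Type} (adj : V -> V -> Prop) (Hs : simple_graph adj) (A : nat)
  (HA : forall (v : V) (l : list V), NoDup l -> (forall w, In w l -> adj v w) -> length l <= A).

Lemma complete_len : forall l, NoDup l -> complete adj (fun y => In y l) -> length l <= S A.
Proof.
  intros [|x r] Hnd Hc; simpl; [lia|].
  apply le_n_S. inversion Hnd; subst. apply (HA x); auto.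
  intros w Hw. apply Hc; simpl; auto. intro; subst; contradiction.
Qed.

Lemma clique_ext : forall l, NoDup l -> complete adj (fun y => In y l) ->
  exists K : clique adj, forall y, In y l -> proj1_sig K y.
Proof.
  assert (H : forall n l, NoDup l -> complete adj (fun y => In y l) -> A + 2 <= length l + n ->
    exists K : clique adj, forall y, In y l -> proj1_sig K y).
  { induction n; intros l Hl Hc Hlen.
    - pose proof (complete_len l Hl Hc); lia.
    - destruct (classic (exists y, ~ In y l /\ forall w, In w l -> adj w y)) as [[y [Hy Hw]]|Hno].
      + destruct (IHn (y :: l)) as [K HK].
        * constructor; auto.
        * intros a b [<-|Ha] [<-|Hb] Hab; try congruence.
          -- apply (proj1 Hs). apply Hw; auto.
          -- apply Hw; auto.
          -- apply Hc; auto.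
        * simpl; lia.
        * exists K; intros z Hz; apply HK; simpl; auto.
      + assert (Hcl : is_clique adj (fun y => In y l)).
        { split; auto. intros K' HK' Hsub x HK'x. apply NNPP; intro Hn. apply Hno.
          exists x; split; auto. intros w Hw. apply HK'; auto. intro; subst; contradiction. }
        exists (exist _ _ Hcl); simpl; auto. }
  intros l Hl Hc; apply (H (A + 2) l); auto; lia.
Qed.

Lemma clique_of_vertex : forall x, exists K : clique adj, proj1_sig K x.
Proof.
  intros x. destruct (clique_ext [x]) as [K HK].
  - constructor; auto; constructor.
  - intros a b [<-|[]] [<-|[]] H; congruence.
  - exists K; apply HK; simpl; auto.
Qed.

Lemma clique_of_edge : forall x z, adj x z -> exists K : clique adj, proj1_sig K x /\ proj1_sig K z.
Proof.
  intros x z Hxz. assert (x <> z) by (intro; subst; apply (proj2 Hs z); auto).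
  destruct (clique_ext [x; z]) as [K HK].
  - constructor; [simpl; intros [<-|[]]; auto|]. constructor; auto; constructor.
  - intros a b [<-|[<-|[]]] [<-|[<-|[]]] H'; try congruence; auto. apply (proj1 Hs); auto.
  - exists K; split; apply HK; simpl; auto.
Qed.

Lemma walk_to_cwalk : forall n x y, walk adj n x y -> forall K K' : clique adj,
  proj1_sig K x -> proj1_sig K' y -> exists j, j <= S n /\ walk (@clique_adj V adj) j K K'.
Proof.
  induction 1; intros K K' Hx Hy.
  - destruct (classic (K = K')) as [<-|Hn].
    + exists 0; split; [lia|constructor].
    + exists 1; split; [lia|]. econstructor; [|constructor]. split; eauto.
  - destruct (clique_of_edge u v H) as [K1 [H1 H2]].
    destruct (IHwalk K1 K' H2 Hy) as [j [Hj Hw]].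
    destruct (classic (K = K1)) as [<-|Hn].
    + exists j; split; auto; lia.
    + exists (S j); split; [lia|]. econstructor; [|eauto]. split; eauto.
Qed.

Lemma cwalk_to_walk : forall m K K', walk (@clique_adj V adj) m K K' ->
  forall x y, proj1_sig K x -> proj1_sig K' y -> exists j, j <= S m /\ walk adj j x y.
Proof.
  induction 1; intros x y Hx Hy.
  - destruct (classic (x = y)) as [<-|Hn].
    + exists 0; split; [lia|constructor].
    + exists 1; split; [lia|]. econstructor; [|constructor].
      apply (proj1 (proj2_sig v)); auto.
  - destruct H as [_ [z [Hz1 Hz2]]].
    destruct (IHwalk z y Hz2 Hy) as [j [Hj Hw]].
    destruct (classic (x = z)) as [<-|Hn].
    + exists j; split; auto; lia.
    + exists (S j); split; [lia|]. econstructor; [|eauto].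
      apply (proj1 (proj2_sig u)); auto.
Qed.

Lemma clique_eq : forall K1 K2 : clique adj,
  (forall y, proj1_sig K1 y <-> proj1_sig K2 y) -> K1 = K2.
Proof.
  intros [P1 p1] [P2 p2]; simpl; intros H.
  assert (P1 = P2) by (extensionality y; apply propositional_extensionality; auto).
  subst. f_equal; apply proof_irrelevance.
Qed.

Lemma cover : forall kl : list V, exists L,
  (forall z y, In z kl -> (z = y \/ adj z y) -> In y L) /\ length L <= length kl * S A.
Proof.
  induction kl as [|z kl IH].
  - exists []; split; [intros ? ? []|simpl; lia].
  - destruct IH as [L [HL HlL]].
    destruct (finite_enum (adj z) A) as [nz [Hnz Hnz2]].
    { intros l Hl Hw; apply (HA z); auto. }
    assert (length nz <= A) by (apply (HA z); auto; intros w Hw; apply Hnz2; auto).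
    exists (z :: nz ++ L); split.
    + intros a y [<-|Ha] [<-|Hy]; simpl; auto.
      * right; apply in_or_app; left; apply Hnz2; auto.
      * right; apply in_or_app; right; eauto.
      * right; apply in_or_app; right; eauto.
    + simpl; rewrite length_app; simpl in *; lia.
Qed.

End S.

Fixpoint allb (n : nat) : list (list bool) :=
  match n with
  | 0 => [nil]
  | S n => map (cons true) (allb n) ++ map (cons false) (allb n)
  end.

Lemma allb_len : forall n, length (allb n) = 2 ^ n.
Proof. induction n; simpl; auto. rewrite length_app, !length_map, IHn; lia. Qed.

Lemma In_allb : forall bl, In bl (allb (length bl)).
Proof.
  induction bl as [|b bl IH]; simpl; auto.
  apply in_or_app; destruct b; [left|right]; apply in_map; auto.
Qed.

Lemma map_eq_in {X Y : Type} (f g : X -> Y) : forall L y, map f L = map g L -> In y L -> f y = g y.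
Proof.
  induction L; simpl; intros y H Hy; [destruct Hy|].
  injection H; intros; destruct Hy; subst; auto.
Qed.

Theorem mainTheorem1 (V : Type) (adj : V -> V -> Prop)
  (Hsimple : simple_graph adj) (Hne : inhabited V)
  (Hconn : connected adj) (Hbd : bounded_degree adj) :
  bounded_degree (@clique_adj V adj) /\
  exists f : V -> clique adj,
    (forall v v' : V, exists m,
        is_dist (@clique_adj V adj) (f v) (f v') m /\
        forall n, is_dist adj v v' n -> n <= m + 1 /\ m <= n + 1) /\
    (forall K : clique adj, exists v m,
        is_dist (@clique_adj V adj) K (f v) m /\ m <= 1).
Proof.
  destruct Hbd as [A HA].
  split.
  - exists (2 ^ (S A * S A)). intros K l Hl Hadj.
    destruct (finite_enum (proj1_sig K) (S A)) as [kl [Hkl Hkl2]].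
    { intros l' Hl' HK. apply (complete_len adj A HA); auto.
      intros a b Ha Hb; apply (proj1 (proj2_sig K)); auto. }
    assert (length kl <= S A).
    { apply (complete_len adj A HA); auto. intros a b Ha Hb; apply (proj1 (proj2_sig K)); apply Hkl2; auto. }
    destruct (cover adj A HA kl) as [L [HL HlL]].
    set (code := fun K' : clique adj =>
      map (fun y => if excluded_middle_informative (proj1_sig K' y) then true else false) L).
    assert (Hsub : forall K', In K' l -> forall y, proj1_sig K' y -> In y L).
    { intros K' HK' y Hy. destruct (Hadj K' HK') as [_ [z [Hz1 Hz2]]].
      apply (HL z y). apply Hkl2; auto.
      destruct (classic (z = y)); auto. right. apply (proj1 (proj2_sig K')); auto. }
    assert (Hnd : NoDup (map code l)).
    { apply (@NoDup_map_NoDup_ForallPairs _ _ code l); auto.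
      intros K1 K2 H1 H2 Heq. apply clique_eq. intros y.
      split; intros Hy.
      - pose proof (map_eq_in _ _ L y Heq (Hsub K1 H1 y Hy)) as E; simpl in E.
        destruct (excluded_middle_informative (proj1_sig K1 y)); [|contradiction].
        destruct (excluded_middle_informative (proj1_sig K2 y)); auto; discriminate.
      - pose proof (map_eq_in _ _ L y Heq (Hsub K2 H2 y Hy)) as E; simpl in E.
        destruct (excluded_middle_informative (proj1_sig K2 y)); [|contradiction].
        destruct (excluded_middle_informative (proj1_sig K1 y)); auto; discriminate. }
    assert (Hinc : incl (map code l) (allb (length L))).
    { intros bl Hbl. apply in_map_iff in Hbl as [K' [<- _]].
      unfold code. pose proof (In_allb (map (fun y => if excluded_middle_informative (proj1_sig K' y) then true else false) L)) as Hi.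
      rewrite length_map in Hi; exact Hi. }
    pose proof (NoDup_incl_length Hnd Hinc) as Hle.
    rewrite length_map, allb_len in Hle.
    eapply Nat.le_trans; [exact Hle|]. apply Nat.pow_le_mono_r; [lia|].
    eapply Nat.le_trans; [exact HlL|]. apply Nat.mul_le_mono_r; auto.
  - assert (Hf : forall x, exists K : clique adj, proj1_sig K x) by (intros x; apply (clique_of_vertex adj Hsimple A HA)).
    pose (f := fun x => proj1_sig (@constructive_indefinite_description (clique adj) (fun K => proj1_sig K x) (Hf x))).
    assert (Hfx : forall x, proj1_sig (f x) x)
      by (intros x; unfold f; apply (proj2_sig (@constructive_indefinite_description (clique adj) (fun K => proj1_sig K x) (Hf x)))).
    exists f.
    split.
    + intros v v'. destruct (Hconn v v') as [n0 Hw0].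
      destruct (walk_to_cwalk adj Hsimple A HA n0 v v' Hw0 _ _ (Hfx v) (Hfx v')) as [j [_ Hj]].
      destruct (walk_min _ _ _ _ Hj) as [m Hm].
      exists m; split; auto. intros n [Hn Hnmin]. split.
      * destruct (cwalk_to_walk adj m _ _ (proj1 Hm) v v' (Hfx v) (Hfx v')) as [k [Hk Hwk]].
        specialize (Hnmin k Hwk); lia.
      * destruct (walk_to_cwalk adj Hsimple A HA n v v' Hn _ _ (Hfx v) (Hfx v')) as [k [Hk Hwk]].
        specialize (proj2 Hm k Hwk); lia.
    + intros K.
      assert (Hex : exists x, proj1_sig K x).
      { destruct Hne as [x0]. apply NNPP; intro Hno. apply Hno. exists x0.
        apply (proj2 (proj2_sig K) (fun y => y = x0)); auto.
        - intros a b -> -> Hab; congruence.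
        - intros y Hy; exfalso; eauto. }
      destruct Hex as [x Hx]. exists x.
      destruct (classic (K = f x)) as [Heq|Hn].
      * exists 0; split; [|lia]. rewrite Heq. split; [constructor|lia].
      * exists 1; split; [|lia]. split.
        -- econstructor; [|constructor]. split; auto. exists x; split; auto.
        -- intros m Hm. inversion Hm; subst; [contradiction|lia].
Qed.
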